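(* Let $\check p>0$, $\check\alpha>0$, $\gamma\ge0$. For all $x>0$ and $T>0$, \[ \tilde v(x,T)\le\bar v(x,T)\le\tilde v(x,T)+\mathbb E^x\big[\mathbf 1_{\{\theta\ge T\}}\big(e^{-rT}\gamma+e^{-r\theta}\check\alpha\big)\big]. \]
   Context: Let $X$ be a spectrally negative Lévy process (no positive jumps, not the negative of a subordinator, Lévy measure without atoms), $\mathbb P^x$ the law with $X_0=x$, $\mathbb E^x$ its expectation, $\mathbb F$ the filtration generated by $X$; $r>0$ fixed with $\log\mathbb E^0[e^{X_1}]=r$. Let $\theta:=\inf\{t\ge0:X_t\le0\}$ ($\inf\emptyset=\infty$, $e^{-r\infty}=0$). $\mathcal S$ is the set of $\mathbb F$-stopping times $\tau\le\theta$ a.s., and for $T>0$, $\mathcal S_T$ the set of $\mathbb F$-stopping times $\tau\le\theta\wedge T$ a.s. Define $v(x):=\sup_{\tau\in\mathcal S}\mathbb E^x\big[\mathbf 1_{\{\tau<\infty\}}\big(\int_\tau^\theta e^{-rt}\check p\,dt-e^{-r\tau}\gamma\mathbf 1_{\{\tau<\theta\}}-e^{-r\theta}\check\alpha\mathbf 1_{\{\tau<\theta\}}\big)\big]$, $\bar v(x,T):=\sup_{\tau\in\mathcal S_T}\mathbb E^x\big[\int_\tau^{\theta\wedge T}e^{-rt}\check p\,dt-e^{-r\tau}\gamma\mathbf 1_{\{\tau<\theta\wedge T\}}-e^{-r\theta}\check\alpha\mathbf 1_{\{\tau<\theta<T\}}\big]$, and $\tilde v(x,T):=v(x)-\mathbb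 E^x\big[\mathbf 1_{\{\theta\ge T\}}\int_T^\theta e^{-rt}\check p\,dt\big]$. *)

(* Defs.v *)
From HB Require Import structures.
From mathcomp Require Import all_boot all_order all_algebra.
From mathcomp Require Import all_classical all_reals all_analysis.
Set Implicit Arguments. Unset Strict Implicit. Unset Printing Implicit Defensive.
Import Order.TTheory GRing.Theory Num.Theory.
Import numFieldNormedType.Exports.
Local Open Scope classical_set_scope.
Local Open Scope ring_scope.

Section defs.
Context {R : realType} {d : measure_display} {Omega : measurableType d}.

Definition mutually_independent (P : probability Omega R) (n : nat)
    (Y : 'I_n -> Omega -> R) : Prop :=
  forall B : 'I_n -> set R, (forall i, measurable (B i)) ->
    P (\bigcap_(i in [set: 'I_n]) (Y i @^-1` B i)) =
    (\prod_(i < n) P (Y i @^-1` B i))%E.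

Definition left_lim (X : R -> Omega -> R) (w : Omega) (t : R) : R :=
  lim ((X^~ w) @ t^'-).

Definition jump (X : R -> Omega -> R) (w : Omega) (t : R) : R :=
  X t w - left_lim X w t.

Definition is_levy (P : probability Omega R) (X : R -> Omega -> R) : Prop :=
  [/\ (forall t, measurable_fun setT (X t)),
      {ae P, forall w, X 0 w = 0},
      (forall w t, 0 <= t -> (X^~ w) x @[x --> t^'+] --> X t w) /\
        (forall w t, 0 < t -> cvg ((X^~ w) @ t^'-)),
      (forall (n : nat) (t : nat -> R), 0 <= t 0%N -> (forall k, t k < t k.+1) ->
         mutually_independent P (fun i : 'I_n => fun w => X (t i.+1) w - X (t i) w))
    & (forall s t (B : set R), 0 <= s -> 0 <= t -> measurable B ->
         P [set w | B (X (t + s) w - X t w)] = P [set w | B (X s w)])].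

Definition levy_measure (P : probability Omega R) (X : R -> Omega -> R)
    (A : set R) : \bar R :=
  (\int[P]_w (\esum_(t in [set t : R | (0 < t <= 1)%R /\ A (jump X w t)]) 1))%E.

(** Spectrally negative Levy process: no positive jumps, not the negative of
    a subordinator, Levy measure without atoms. *)
Definition is_spectrally_negative_levy (P : probability Omega R)
    (X : R -> Omega -> R) : Prop :=
  [/\ is_levy P X,
      {ae P, forall w, forall t, 0 < t -> jump X w t <= 0},
      ~ {ae P, forall w, forall s t, 0 <= s -> s <= t -> X t w <= X s w}
    & (forall a : R, a != 0 -> levy_measure P X [set a] = 0%E)].

(** The process under P^x: x + X. *)
Definition start_at (x : R) (X : R -> Omega -> R) : R -> Omega -> R :=
  fun t w => x + X t w.

Definition natural_filtration (Y : R -> Omega -> R) (t : R) : set (set Omega) :=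
  <<s [set A | exists s, [/\ 0 <= s, s <= t &
                 exists B : set R, measurable B /\ A = Y s @^-1` B]] >>.

Definition stopping_time (Y : R -> Omega -> R) (tau : Omega -> \bar R) : Prop :=
  (forall w, (0 <= tau w)%E) /\
  (forall t, 0 <= t -> natural_filtration Y t [set w | (tau w <= t%:E)%E]).

(** theta := inf {t >= 0 : Y_t <= 0}, inf of the empty set = +oo. *)
Definition theta (Y : R -> Omega -> R) (w : Omega) : \bar R :=
  ereal_inf [set t%:E | t in [set t : R | 0 <= t /\ Y t w <= 0]].

(** e^{-r t} with the convention e^{-r oo} = 0. *)
Definition edisc (r : R) (t : \bar R) : R :=
  match t with EFin s => expR (- r * s) | _ => 0 end.

Definition dint (r p : R) (a b : \bar R) : \bar R :=
  (\int[lebesgue_measure]_(t in [set t : R | (a <= t%:E)%E /\ (t%:E < b)%E])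
     (p * expR (- r * t))%:E)%E.

Local Open Scope ereal_scope.

Definition payoff (r p g al : R) (Y : R -> Omega -> R) (tau : Omega -> \bar R)
    (w : Omega) : \bar R :=
  if tau w < +oo then
    dint r p (tau w) (theta Y w)
    - (if tau w < theta Y w then (g * edisc r (tau w))%:E else 0)
    - (if tau w < theta Y w then (al * edisc r (theta Y w))%:E else 0)
  else 0.

Definition payoff_bar (r p g al Tm : R) (Y : R -> Omega -> R)
    (tau : Omega -> \bar R) (w : Omega) : \bar R :=
  dint r p (tau w) (mine (theta Y w) Tm%:E)
  - (if tau w < mine (theta Y w) Tm%:E then (g * edisc r (tau w))%:E else 0)
  - (if (tau w < theta Y w) && (theta Y w < Tm%:E)
     then (al * edisc r (theta Y w))%:E else 0).

Definition v (P : probability Omega R) (X : R -> Omega -> R) (r p g al x : R)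
    : \bar R :=
  ereal_sup [set \int[P]_w payoff r p g al (start_at x X) tau w | tau in
    [set tau | stopping_time (start_at x X) tau /\
               {ae P, forall w, tau w <= theta (start_at x X) w}]].

Definition vbar (P : probability Omega R) (X : R -> Omega -> R)
    (r p g al x Tm : R) : \bar R :=
  ereal_sup [set \int[P]_w payoff_bar r p g al Tm (start_at x X) tau w | tau in
    [set tau | stopping_time (start_at x X) tau /\
               {ae P, forall w, tau w <= mine (theta (start_at x X) w) Tm%:E}]].

Definition vtilde (P : probability Omega R) (X : R -> Omega -> R)
    (r p g al x Tm : R) : \bar R :=
  v P X r p g al x
  - \int[P]_w (if Tm%:E <= theta (start_at x X) w
               then dint r p Tm%:E (theta (start_at x X) w) else 0).

End defs.

(* Main.v *)
Require Import Defs.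
From HB Require Import structures.
From mathcomp Require Import all_boot all_order all_algebra.
From mathcomp Require Import all_classical all_reals all_analysis.
From mathcomp Require Import measurable_realfun.
From mathcomp Require Import lra.
Set Implicit Arguments. Unset Strict Implicit. Unset Printing Implicit Defensive.
Import Order.TTheory GRing.Theory Num.Theory.
Import numFieldNormedType.Exports.
Local Open Scope classical_set_scope.
Local Open Scope ring_scope.
Section S1.
Context {R : realType}.
Notation mu := (@lebesgue_measure R).
Local Open Scope ereal_scope.

Lemma int_exppdf (r a : R) : (0 < r)%R -> (0 <= a)%R ->
  \int[mu]_(x in `[a, +oo[) (exponential_pdf r x)%:E = (expR (- r * a))%:E.
Proof.
move=> r0 a0.
have cexpNM : continuous (fun z : R^o => expR (- r * z)).
  move=> z; apply: continuous_comp; last exact: continuous_expR.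
  by apply: continuousM => //; apply: (@continuousN _ R^o); exact: cst_continuous.
rewrite (@ge0_continuous_FTC2y _ _ (fun x => - (expR (- r * x)))%R _ 0)//.
- by rewrite EFinN oppeK add0e.
- by move=> x _; apply: exponential_pdf_ge0; exact: ltW.
- apply: (@continuous_subspaceW R^o _ _ [set` `[0, +oo[%R]).
    by apply: subset_itvr; rewrite bnd_simp.
  exact: within_continuous_exponential_pdf.
- rewrite -oppr0; apply: cvgN.
  rewrite (_ : (fun x => expR (- r * x))%R =
               (fun z => expR (- z))%R \o (fun z => r * z)%R); last first.
    by apply: eq_fun => x; rewrite mulNr.
  apply: (@cvg_comp _ _ _ _ _ _ (pinfty_nbhs R)); last exact: cvgr_expR.
  exact: gt0_cvgMry.
- by apply: cvgN; apply/cvg_at_right_filter; exact: cexpNM.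
- move=> x; rewrite in_itv/= andbT => ax.
  apply: derive1_exponential_pdf; rewrite in_itv/= andbT.
  exact: le_lt_trans ax.
Qed.

Lemma int_exp (r p a : R) : (0 < r)%R -> (0 <= p)%R -> (0 <= a)%R ->
  \int[mu]_(x in `[a, +oo[) (p * expR (- r * x))%:E = (p / r * expR (- r * a))%:E.
Proof.
move=> r0 p0 a0.
transitivity (\int[mu]_(x in `[a, +oo[) ((p / r)%:E * (exponential_pdf r x)%:E)).
  apply: eq_integral => x; rewrite inE/= in_itv/= andbT => ax.
  rewrite (@exponential_pdfE _ r) ?(le_trans a0)//.
  by rewrite -EFinM mulrA divfK// gt_eqF.
rewrite ge0_integralZl//; last 3 first.
- apply/measurable_realfun.measurable_EFinP; apply: measurable_funTS.
  by apply: measurable_exponential_pdf; exact: ltW.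
- by move=> x _; rewrite lee_fin exponential_pdf_ge0// ltW.
- by rewrite lee_fin divr_ge0// ltW.
by rewrite int_exppdf// -EFinM.
Qed.

Lemma dintE (r p : R) (a b : \bar R) : (0 < r)%R -> (0 <= p)%R -> (0 <= a)%E ->
  dint r p a b = (if (a < b)%E then (p / r) * (edisc r a - edisc r b) else 0)%:E.
Proof.
move=> r0 p0; rewrite /dint.
case: a => [s| |] //= s0; last first.
  rewrite ltNge leey /= (_ : [set _ | _] = set0) ?integral_set0//.
  by apply/seteqP; split => t //= [] ; rewrite leNgt ltey.
have {}s0 : (0 <= s)%R by rewrite -lee_fin.
case: b => [u| |].
- have [su|us] := ltP s u.
    rewrite lte_fin su /=.
    have H := int_exp r0 p0 s0.
    rewrite (_ : `[s, +oo[%classic = [set t | (s%:E <= t%:E) /\ (t%:E < u%:E)] `|` `[u, +oo[) in H; last first.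
      apply/seteqP; split => t /=; rewrite !in_itv /= !andbT !lee_fin !lte_fin.
        by move=> st; have [tu|ut] := ltP t u; [left|right].
      by case=> [[]//|]; apply/le_trans/ltW.
    rewrite ge0_integral_setU //= in H; last 4 first.
    + rewrite (_ : [set t | _ /\ _] = `[s, u[%classic); first exact: measurable_itv.
      by apply/seteqP; split => t /=; rewrite in_itv/= !lee_fin !lte_fin => /andP.
    + apply/measurable_realfun.measurable_EFinP; apply: measurableT_comp => //.
      apply: measurableT_comp => //; exact: mulrl_measurable.
    + by move=> t _; rewrite lee_fin mulr_ge0// expR_ge0.
    + apply/disj_setPS => t [[_]]; rewrite lte_fin => tu.
      by rewrite /= in_itv/= andbT leNgt tu.
    rewrite int_exp// in H; last exact: (le_trans s0 (ltW su)).
    by rewrite mulrBr EFinB -H addeK.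
  rewrite lte_fin ltNge us /= (_ : [set _ | _] = set0) ?integral_set0//.
  by apply/seteqP; split => t //= []; rewrite !lee_fin lte_fin => st tu; move: (le_lt_trans st tu); rewrite ltNge us.
- rewrite ltey /= subr0.
  rewrite -int_exp//; congr (integral _ _ _).
  by apply/seteqP; split => t /=; rewrite in_itv/= andbT lee_fin ?ltry//; case.
- rewrite ltNge leNye /= (_ : [set _ | _] = set0) ?integral_set0//.
  by apply/seteqP; split => t //= [].
Qed.
End S1.

Section meas.
Context {R : realType} {d : measure_display} {T : measurableType d}.
Local Open Scope ereal_scope.

Lemma emeas_le (f : T -> \bar R) :
  (forall t : R, measurable [set w | f w <= t%:E]) -> measurable_fun setT f.
Proof.
move=> H mT; apply: (measurability _ (ErealGenInftyO.measurableE R)) => //.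
move=> _ [_ [x ->] <-].
rewrite (_ : _ `&` _ = \bigcup_(q : rat)
   (if (ratr q < x)%R then [set w | f w <= (ratr q)%:E] else set0)).
  by apply: bigcupT_measurable_rat => q; case: ifP => // _; exact: H.
apply/seteqP; split=> w /=.
  rewrite in_itv /= => -[_].
  case E: (f w) => [s| |] //.
  - rewrite lte_fin => /rat_in_itvoo[q]; rewrite in_itv/= => /andP[sq qx].
    by exists q => //; rewrite qx /= E lee_fin ltW.
  - move=> _; have /rat_in_itvoo[q] : (x - 1 < x)%R by rewrite ltrBlDr ltrDl.
    rewrite in_itv/= => /andP[_ qx].
    by exists q => //; rewrite qx /= E leNye.
move=> [q _]; case: ifP => // qx /= fq; split => //.
by rewrite in_itv/= (le_lt_trans fq)// lte_fin.
Qed.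


Lemma edisc_meas (r : R) : measurable_fun setT (edisc r).
Proof.
rewrite (_ : edisc r = fun t => if t \is a fin_num then expR (- r * fine t) else 0%R);
  last by apply/funext => -[].
apply: measurable_fun_ifT => //.
- apply: (measurable_fun_bool true); rewrite setTI.
  rewrite (_ : _ @^-1` _ = setT `&` [set x | id x \is a fin_num]).
    exact: emeasurable_fin_num.
  by apply/seteqP; split => x /=; [move=> ->|case=> _ ->].
- rewrite (_ : (fun t : \bar R => _) = expR \o ( *%R (- r) \o fine))//.
  apply: measurableT_comp; first exact: measurable_expR.
  by apply: measurableT_comp => //; exact: mulrl_measurable.
Qed.

Lemma stopping_meas (Y : R -> T -> R) (tau : T -> \bar R) :
  (forall s, measurable_fun setT (Y s)) -> stopping_time Y tau ->
  measurable_fun setT tau.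
Proof.
move=> mY [tau0 st]; apply: emeas_le => t.
have [t0|t0] := ltP t 0%R.
  rewrite (_ : [set _ | _] = set0) //; apply/seteqP; split => w //=.
  by move=> /(le_trans (tau0 w)); rewrite lee_fin leNgt t0.
have := st t t0; apply: smallest_sub; first exact: sigma_algebra_measurable.
move=> A [s [_ _ [B [mB ->]]]].
by rewrite -[_ @^-1` _]setTI; exact: (mY s measurableT B mB).
Qed.
End meas.
Section T.
Context {R : realType}.
Lemma near_right_ball (u : R) (P : R -> Prop) :
  (\forall v \near u^'+, P v) -> exists2 e : R, 0 < e & forall v, u < v < u + e -> P v.
Proof.
move=> /nbhs_ballP[e /= e0 H]; exists e => // v /andP[uv ve]; apply: H => //.
rewrite /ball /= ltr0_norm ?subr_lt0// opprB ltrBlDl //.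
Qed.
Lemma near_left_ball (u : R) (P : R -> Prop) :
  (\forall v \near u^'-, P v) -> exists2 e : R, 0 < e & forall v, u - e < v < u -> P v.
Proof.
move=> /nbhs_ballP[e /= e0 H]; exists e => // v /andP[uv ve]; apply: H => //.
rewrite /ball /= gtr0_norm ?subr_gt0// ltrBlDr -ltrBlDl //.
Qed.
End T.
Section TH.
Context {R : realType} {d : measure_display} {T : measurableType d}.
Variable Y : R -> T -> R.
Local Open Scope ereal_scope.

Lemma theta_ge0 w : 0 <= theta Y w.
Proof. by apply: le_ereal_inf_tmp => _ [t [t0 _] <-]; rewrite lee_fin. Qed.

Lemma theta_le w (t : R) :
  (forall s, (0 <= s)%R -> (Y^~ w) x @[x --> s^'+] --> Y s w) ->
  theta Y w <= t%:E <-> exists s, [/\ (0 <= s)%R, (s <= t)%R & (Y s w <= 0)%R].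
Proof.
move=> rc; split; last first.
  move=> [s [s0 st Ys]]; apply: le_trans (_ : s%:E <= _); last by rewrite lee_fin.
  by apply: ereal_inf_lbound; exists s.
move=> tht.
have th0 := theta_ge0 w.
have thfin : theta Y w \is a fin_num by rewrite ge0_fin_numE// (le_lt_trans tht)// ltry.
set u := fine (theta Y w).
have thu : theta Y w = u%:E by rewrite fineK.
have u0 : (0 <= u)%R by rewrite -lee_fin -thu.
have ut : (u <= t)%R by rewrite -lee_fin -thu.
have [Yu|Yu] := leP (Y u w) 0%R; first by exists u.
have [e e0 He] := near_right_ball (cvgr_gt _ (rc u u0) _ Yu).
have : (u + e)%:E <= theta Y w.
  apply: le_ereal_inf_tmp => _ [s [s0 Ys] <-].
  have us : u%:E <= s%:E by rewrite -thu; apply: ereal_inf_lbound; exists s.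
  rewrite lee_fin leNgt; apply/negP => se.
  rewrite lee_fin le_eqVlt in us; case/orP: us => [/eqP us|us].
    by move: Yu; rewrite us ltNge Ys.
  by have := He s; rewrite us se => /(_ isT); rewrite ltNge Ys.
by rewrite thu lee_fin gerDl leNgt e0.
Qed.
End TH.
Section PL.
Context {R : realType}.
Lemma pos_lb (f : R -> R) (t : R) :
  (forall s, 0 <= s -> f x @[x --> s^'+] --> f s) ->
  (forall s, 0 < s -> exists l, f x @[x --> s^'-] --> l /\ f s <= l) ->
  (forall s, 0 <= s <= t -> 0 < f s) ->
  exists2 e, 0 < e & forall s, 0 <= s <= t -> e < f s.
Proof.
move=> rc lc fpos.
have cK := @segment_compact _ 0 t.
have /near_covering_withinP ncw := (compact_near_coveringP _).1 cK.
have := ncw R (nbhs (0:R)^'+) (fun e s => e < f s) (at_right_proper_filter _).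
case.
- move=> s; rewrite /= in_itv/= => /andP[s0 st].
  have fs0 : 0 < f s by apply: fpos; rewrite s0 st.
  set c := f s / 2.
  have c0 : 0 < c by rewrite divr_gt0.
  have cfs : c < f s by rewrite /c ltr_pdivrMr// ltr_pMr// ltr1n.
  have [e1 e10 H1] := near_right_ball (cvgr_gt _ (rc s s0) _ cfs).
  have [e2 e20 H2] : exists2 e2 : R, 0 < e2 & forall v, s - e2 < v < s -> 0 <= v -> c < f v.
    have [s0'|s0'] := eqVneq s 0.
      by exists 1 => // v; rewrite s0' sub0r => /andP[_ v0]; rewrite leNgt v0.
    have sp : 0 < s by rewrite lt_neqAle eq_sym s0' s0.
    have [l [fl fsl]] := lc s sp.
    have [e2 e20 H2] := near_left_ball (cvgr_gt _ fl _ (lt_le_trans cfs fsl)).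
    by exists e2 => // v /H2.
  exists ([set v | `|s - v| < Num.min e1 e2], [set e | e < c]); first split.
  + by exists (Num.min e1 e2) => //=; rewrite lt_min e10 e20.
  + exists c => // e /=; rewrite sub0r normrN => /ltr_normlW ec _; exact: ec.
  + case=> v e /= [sv ec]; rewrite in_itv/= => /andP[v0 vt].
    apply: (lt_trans ec).
    have [vs|vs|->//] := ltgtP v s.
    * apply: H2 => //; apply/andP; split => //.
      move: sv; rewrite gtr0_norm ?subr_gt0// lt_min => /andP[_].
      by rewrite ltrBlDr -ltrBlDl.
    * apply: H1; apply/andP; split => //.
      move: sv; rewrite ltr0_norm ?subr_lt0// lt_min opprB => /andP[+ _].
      by rewrite ltrBlDl.
- move=> e /= e0 He; exists (e / 2); first by rewrite divr_gt0.
  move=> s st; apply: (He (e / 2)) => /=.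
  + by rewrite sub0r normrN gtr0_norm ?divr_gt0// ltr_pdivrMr// ltr_pMr// ltr1n.
  + by rewrite divr_gt0.
  + by rewrite in_itv.
Qed.
End PL.

Section THM.
Context {R : realType} {d : measure_display} {T : measurableType d}.

Lemma meas_lt (g : T -> R) c : measurable_fun setT g -> measurable [set w | g w < c].
Proof.
move=> mg; rewrite (_ : [set _ | _] = setT `&` g @^-1` `]-oo, c[).
  by apply: mg => //; exact: measurable_itv.
by apply/seteqP; split => w /=; rewrite in_itv/= ?andbT //; case.
Qed.

Lemma theta_meas (P : probability T R) (X : R -> T -> R) (x : R) :
  measure_is_complete P ->
  (forall s, measurable_fun setT (X s)) ->
  (forall w s, 0 <= s -> (X^~ w) u @[u --> s^'+] --> X s w) ->
  (forall w s, 0 < s -> cvg ((X^~ w) @ s^'-)) ->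
  {ae P, forall w, forall s, 0 < s -> jump X w s <= 0} ->
  measurable_fun setT (theta (start_at x X)).
Proof.
move=> Pc mX rc lc [N [mN PN0 HN]].
set Y := start_at x X.
have mY s : measurable_fun setT (Y s).
  by apply: measurable_funD => //; exact: measurable_cst.
have rcY w s : 0 <= s -> (Y^~ w) u @[u --> s^'+] --> Y s w.
  by move=> s0; apply: cvgD; [exact: cvg_cst | exact: rc].
apply: emeas_le => t.
have [t0|t0] := ltP t 0.
  rewrite (_ : [set _ | _] = set0) //; apply/seteqP; split => w //=.
  by move=> /(le_trans (theta_ge0 Y w)); rewrite lee_fin leNgt t0.
set S := [set w | (theta Y w <= t%:E)%E].
pose M : set T := \bigcap_(n in [set: nat]) ([set w | Y t w < n.+1%:R^-1] `|`
   \bigcup_(q : rat) [set w | (0 <= (ratr q : R) <= t) /\ Y (ratr q) w < n.+1%:R^-1]).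
have mM : measurable M.
  apply: bigcapT_measurable => n; apply: measurableU; first exact: meas_lt.
  apply: bigcupT_measurable_rat => q.
  have [qt|qt] := boolP (0 <= ratr q <= t).
    rewrite (_ : [set _ | _] = [set w | Y (ratr q) w < n.+1%:R^-1]); first exact: meas_lt.
    by apply/seteqP; split => w /=; [case|].
  by rewrite (_ : [set _ | _] = set0) //; apply/seteqP; split => w //= [qt' _]; move/negP: qt; apply.
have -> : S = (M `\` N) `|` (S `&` N).
  apply/seteqP; split => w.
  - move=> Sw; have [Nw|Nw] := pselect (N w); first by right.
    left; split => //.
    have [s [s0 st Ys]] := (theta_le t (rcY w)).1 Sw.
    move=> n _ /=.
    have n0 : (0 < n.+1%:R^-1 :> R) by rewrite invr_gt0 ltr0Sn.
    have [seq|stl] := eqVneq s t; first by left; rewrite -seq; exact: le_lt_trans Ys n0.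
    have {stl} stl : s < t by rewrite lt_neqAle stl st.
    right.
    have [e e0 He] := near_right_ball (cvgr_lt _ (rcY w s s0) _ (le_lt_trans Ys n0)).
    have /rat_in_itvoo[q] : s < Num.min (s + e) t by rewrite lt_min stl ltrDl e0.
    rewrite in_itv/= lt_min => /andP[sq /andP[qe qt]].
    exists q => //; split.
      by rewrite (le_trans s0 (ltW sq)) ltW.
    by apply: He; rewrite sq qe.
  - case=> [[Mw Nw]|[]//].
    have good : forall s, 0 < s -> jump X w s <= 0.
      by apply: contrapT => ng; apply: Nw; apply: HN.
    apply: contrapT => nS.
    have ypos : forall s, 0 <= s <= t -> 0 < Y s w.
      move=> s /andP[s0 st]; rewrite ltNge; apply/negP => Ys.
      by apply: nS; apply/(theta_le t (rcY w)); exists s.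
    have lcY : forall s, 0 < s -> exists l, (Y^~ w) u @[u --> s^'-] --> l /\ Y s w <= l.
      move=> s s0; exists (x + lim ((X^~ w) @ s^'-)); split.
        by apply: cvgD; [exact: cvg_cst| exact: lc].
      have := good s s0; rewrite /jump /left_lim subr_le0 => H.
      by rewrite /Y /start_at lerD2l.
    have [e e0 He] := pos_lb (rcY w) lcY ypos.
    have nn := truncnS_gt e^-1.
    set n := Num.trunc e^-1 in nn.
    have ne : n.+1%:R^-1 < e.
      by rewrite -[e]invrK ltf_pV2 ?posrE ?invr_gt0 ?ltr0Sn.
    case: (Mw n I) => /=.
      move=> Yt; have := He t; rewrite t0 lexx => /(_ isT).
      by move/(lt_trans (lt_trans Yt ne)); rewrite ltxx.
    move=> [q _ [qt Yq]]; have := He _ qt.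
    by move/(lt_trans (lt_trans Yq ne)); rewrite ltxx.
apply: measurableU; first exact: measurableD.
by apply: Pc; exists N; split => //; apply: subIsetr.
Qed.
End THM.
Section PT.
Context {R : realType}.
Local Open Scope ereal_scope.

Definition Pv (c g al r : R) (a h : \bar R) : R :=
  if a < h then (c * (edisc r a - edisc r h) - g * edisc r a - al * edisc r h)%R else 0%R.
Definition PBv (c g al r T : R) (a h : \bar R) : R :=
  ((if (a < mine h T%:E)%E then c * (edisc r a - edisc r (mine h T%:E)) - g * edisc r a else 0)
  - (if (a < h)%E && (h < T%:E)%E then al * edisc r h else 0))%R.
Definition Gv (c r T : R) (h : \bar R) : R :=
  if T%:E <= h then (if (T%:E < h)%E then c * (edisc r T%:E - edisc r h) else 0)%R else 0%R.
Definition Kv (g al r T : R) (h : \bar R) : R :=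
  if T%:E <= h then (g * expR (- r * T) + al * edisc r h)%R else 0%R.

Lemma edisc_ge0 (r : R) (a : \bar R) : (0 <= edisc r a)%R.
Proof. by case: a => //= s; exact: expR_ge0. Qed.

Lemma edisc_anti (r : R) (p q : \bar R) : (0 <= r)%R -> 0 <= p -> p <= q -> (edisc r q <= edisc r p)%R.
Proof.
move=> r0; case: p => [s| |] //=; case: q => [u| |] //= s0; rewrite ?lee_fin => su;
  try exact: expR_ge0.
by rewrite ler_expR !mulNr lerN2 ler_wpM2l.
Qed.

Lemma ptL (c g al r T : R) (a h : \bar R) : (0 <= c)%R -> (0 <= g)%R -> (0 <= al)%R -> (0 <= r)%R ->
  (0 < T)%R -> 0 <= a -> a <= h ->
  (Pv c g al r a h - Gv c r T h <= PBv c g al r T (mine a T%:E) h)%R.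
Proof.
move=> c0 g0 al0 r0 T0 a0 ah.
have eA := edisc_ge0 r a; have eH := edisc_ge0 r h; have eT := edisc_ge0 r T%:E.
have eAH := edisc_anti r0 a0 ah.
rewrite /Pv /PBv /Gv.
have [hT|Th] := ltP h T%:E.
  have aT : a < T%:E by exact: le_lt_trans ah hT.
  rewrite /Order.min aT andbT.
  by case: ifP => _; nra.
have T0' : 0 <= T%:E by rewrite lee_fin ltW.
have eTH := edisc_anti r0 T0' Th.
rewrite andbF subr0 /Order.min.
have [aT|Ta] := ltP a T%:E.
  rewrite (lt_le_trans aT Th) aT.
  have [Th'|Th'] := ltP T%:E h; first nra.
  have hTe : h = T%:E by apply/eqP; rewrite eq_le Th Th'.
  rewrite hTe; nra.
rewrite ltxx.
have eAT := edisc_anti r0 T0' Ta.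
case: ifP => ah'; last by case: ifP => _; nra.
by rewrite (le_lt_trans Ta ah'); nra.
Qed.

Lemma ptU (c g al r T : R) (a h : \bar R) : (0 <= c)%R -> (0 <= g)%R -> (0 <= al)%R -> (0 <= r)%R ->
  (0 < T)%R -> 0 <= a -> a <= h -> a <= T%:E ->
  (PBv c g al r T a h <= Pv c g al r a h - Gv c r T h + Kv g al r T h)%R.
Proof.
move=> c0 g0 al0 r0 T0 a0 ah aT.
have eA := edisc_ge0 r a; have eH := edisc_ge0 r h; have eT := edisc_ge0 r T%:E.
have eAH := edisc_anti r0 a0 ah.
have eTe : edisc r T%:E = expR (- r * T) by [].
rewrite /Pv /PBv /Gv /Kv -eTe.
have [hT|Th] := ltP h T%:E.
  rewrite /Order.min andbT.
  by case: ifP => _; nra.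
have T0' : 0 <= T%:E by rewrite lee_fin ltW.
have eTH := edisc_anti r0 T0' Th.
rewrite andbF subr0 /Order.min.
have [aT'|Ta] := ltP a T%:E.
  rewrite (lt_le_trans aT' Th).
  have [Th'|Th'] := ltP T%:E h; first nra.
  have hTe : h = T%:E by apply/eqP; rewrite eq_le Th Th'.
  rewrite hTe; nra.
have aTe : a = T%:E by apply/eqP; rewrite eq_le aT Ta.
rewrite aTe.
have [Th'|Th'] := ltP T%:E h; nra.
Qed.
End PT.

Section MF.
Context {R : realType} {d : measure_display} {T : measurableType d}.
Local Open Scope ereal_scope.
Implicit Types (f g a h : T -> \bar R).

Lemma meas_blt f g : measurable_fun setT f -> measurable_fun setT g ->
  measurable_fun setT (fun w => f w < g w).
Proof.
move=> mf mg; apply: (measurable_fun_bool true).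
rewrite (_ : _ `&` _ = setT `&` [set x | f x < g x]); first exact: measurable_lte.
by apply/seteqP; split => w /=.
Qed.

Lemma meas_ble f g : measurable_fun setT f -> measurable_fun setT g ->
  measurable_fun setT (fun w => f w <= g w).
Proof.
move=> mf mg; apply: (measurable_fun_bool true).
rewrite (_ : _ `&` _ = setT `&` [set x | f x <= g x]); first exact: measurable_lee.
by apply/seteqP; split => w /=.
Qed.

Lemma Pv_meas (c g al r : R) a h : measurable_fun setT a -> measurable_fun setT h ->
  measurable_fun setT (fun w => Pv c g al r (a w) (h w)).
Proof.
move=> ma mh; have ea := measurableT_comp (edisc_meas r) ma.
have eh := measurableT_comp (edisc_meas r) mh.
rewrite /Pv; apply: measurable_fun_ifT; [exact: meas_blt| |exact: measurable_cst].
apply: measurable_funB; first apply: measurable_funB.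
- by apply: measurable_funM; [exact: measurable_cst| exact: measurable_funB].
- by apply: measurable_funM; [exact: measurable_cst| exact: ea].
- by apply: measurable_funM; [exact: measurable_cst| exact: eh].
Qed.

Lemma PBv_meas (c g al r Tm : R) a h : measurable_fun setT a -> measurable_fun setT h ->
  measurable_fun setT (fun w => PBv c g al r Tm (a w) (h w)).
Proof.
move=> ma mh; have ea := measurableT_comp (edisc_meas r) ma.
have eh := measurableT_comp (edisc_meas r) mh.
have mhT : measurable_fun setT (fun w => mine (h w) Tm%:E).
  by apply: measurable_mine => //; exact: measurable_cst.
have ehT := measurableT_comp (edisc_meas r) mhT.
rewrite /PBv; apply: measurable_funB.
- apply: measurable_fun_ifT; [exact: meas_blt| |exact: measurable_cst].
  apply: measurable_funB.
  + by apply: measurable_funM; [exact: measurable_cst| exact: measurable_funB].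
  + by apply: measurable_funM; [exact: measurable_cst| exact: ea].
- apply: measurable_fun_ifT; [|exact: measurable_funM (measurable_cst _) eh|exact: measurable_cst].
  apply: measurable_and; first exact: meas_blt.
  by apply: meas_blt => //; exact: measurable_cst.
Qed.

Lemma Gv_meas (c r Tm : R) h : measurable_fun setT h ->
  measurable_fun setT (fun w => Gv c r Tm (h w)).
Proof.
move=> mh; have eh := measurableT_comp (edisc_meas r) mh.
rewrite /Gv; apply: measurable_fun_ifT; [| |exact: measurable_cst].
- by apply: meas_ble => //; exact: measurable_cst.
- apply: measurable_fun_ifT; [| |exact: measurable_cst].
  + by apply: meas_blt => //; exact: measurable_cst.
  + apply: measurable_funM; first exact: measurable_cst.
    by apply: measurable_funB => //; exact: measurable_cst.
Qed.

Lemma Kv_meas (g al r Tm : R) h : measurable_fun setT h ->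
  measurable_fun setT (fun w => Kv g al r Tm (h w)).
Proof.
move=> mh; have eh := measurableT_comp (edisc_meas r) mh.
rewrite /Kv; apply: measurable_fun_ifT; [|apply: measurable_funD|exact: measurable_cst].
- by apply: meas_ble => //; exact: measurable_cst.
- exact: measurable_cst.
- by apply: measurable_funM; [exact: measurable_cst| exact: eh].
Qed.

Lemma int_bnd (P : probability T R) (f : T -> R) (M : R) : (0 <= M)%R -> measurable_fun setT f ->
  (forall w, (`|f w| <= M)%R) -> P.-integrable setT (EFin \o f).
Proof.
move=> M0 mf fM; apply/integrableP; split; first exact/measurable_EFinP.
apply: (le_lt_trans (_ : _ <= \int[P]_(w in setT) M%:E)).
  apply: ge0_le_integral => //.
  - apply: measurableT_comp => //; exact/measurable_EFinP.
  - by move=> w _; rewrite lee_fin (le_trans _ (fM w)).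
rewrite integral_cst //; apply: lte_mul_pinfty => //.
by apply: (le_lt_trans (probability_le1 _ _)) => //; rewrite ltry.
Qed.
End MF.

Section BND.
Context {R : realType}.
Local Open Scope ereal_scope.

Lemma edisc_le1 (r : R) a : (0 <= r)%R -> 0 <= a -> (edisc r a <= 1)%R.
Proof.
move=> r0; case: a => [s| |] //= s0.
by rewrite expR_le1 mulNr oppr_le0 mulr_ge0// -lee_fin.
Qed.

Lemma Pv_bnd (c g al r : R) a h : (0 <= c)%R -> (0 <= g)%R -> (0 <= al)%R -> (0 <= r)%R ->
  0 <= a -> 0 <= h -> (`|Pv c g al r a h| <= c + g + al)%R.
Proof.
move=> c0 g0 al0 r0 a0 h0.
have := edisc_ge0 r a; have := edisc_ge0 r h.
have := edisc_le1 r0 a0; have := edisc_le1 r0 h0.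
rewrite /Pv; case: ifP => _ *; last by rewrite normr0 !addr_ge0.
rewrite ler_norml; apply/andP; split; nra.
Qed.

Lemma PBv_bnd (c g al r T : R) a h : (0 <= c)%R -> (0 <= g)%R -> (0 <= al)%R -> (0 <= r)%R ->
  (0 < T)%R -> 0 <= a -> 0 <= h -> (`|PBv c g al r T a h| <= c + g + al)%R.
Proof.
move=> c0 g0 al0 r0 T0 a0 h0.
have m0 : 0 <= mine h T%:E by rewrite le_min h0 lee_fin ltW.
have := edisc_ge0 r a; have := edisc_ge0 r h; have := edisc_ge0 r (mine h T%:E).
have := edisc_le1 r0 a0; have := edisc_le1 r0 h0; have := edisc_le1 r0 m0.
rewrite /PBv; case: ifP => _; case: ifP => _ *; rewrite ler_norml; apply/andP; split; nra.
Qed.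

Lemma Gv_bnd (c r T : R) h : (0 <= c)%R -> (0 <= r)%R -> (0 < T)%R -> 0 <= h ->
  (`|Gv c r T h| <= c)%R.
Proof.
move=> c0 r0 T0 h0.
have T0' : 0 <= T%:E by rewrite lee_fin ltW.
have := edisc_ge0 r h; have := edisc_ge0 r T%:E.
have := edisc_le1 r0 h0; have := edisc_le1 r0 T0'.
move=> *; rewrite /Gv; repeat case: ifP => _; rewrite ler_norml; apply/andP; split; nra.
Qed.

Lemma Kv_bnd (g al r T : R) h : (0 <= g)%R -> (0 <= al)%R -> (0 <= r)%R -> (0 < T)%R -> 0 <= h ->
  (`|Kv g al r T h| <= g + al)%R.
Proof.
move=> g0 al0 r0 T0 h0.
have T0' : 0 <= T%:E by rewrite lee_fin ltW.
have eTe : edisc r T%:E = expR (- r * T) by [].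
have := edisc_ge0 r h; have := edisc_ge0 r T%:E.
have := edisc_le1 r0 h0; have := edisc_le1 r0 T0'.
rewrite /Kv -eTe; case: ifP => _ *; rewrite ler_norml; apply/andP; split; nra.
Qed.

End BND.

Section RW.
Context {R : realType} {d : measure_display} {T : measurableType d}.
Local Open Scope ereal_scope.

Lemma payoffE (r p g al : R) (Y : R -> T -> R) (tau : T -> \bar R) w :
  (0 < r)%R -> (0 <= p)%R -> 0 <= tau w ->
  payoff r p g al Y tau w = (Pv (p / r) g al r (tau w) (theta Y w))%:E.
Proof.
move=> r0 p0 t0; rewrite /payoff /Pv dintE //.
case: ifPn => [tfin|].
  by case: ifP => _; rewrite ?EFinB // !sube0.
rewrite -leNgt leye_eq => /eqP ->.
by rewrite ltNge leey.
Qed.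

Lemma payoff_barE (r p g al Tm : R) (Y : R -> T -> R) (tau : T -> \bar R) w :
  (0 < r)%R -> (0 <= p)%R -> 0 <= tau w ->
  payoff_bar r p g al Tm Y tau w = (PBv (p / r) g al r Tm (tau w) (theta Y w))%:E.
Proof.
move=> r0 p0 t0; rewrite /payoff_bar /PBv dintE //.
by case: ifP => _; case: ifP => _; rewrite ?EFinB // ?sube0 ?subr0 ?sub0e ?sub0r ?EFinN.
Qed.

Lemma GE (r p Tm : R) (h : \bar R) : (0 < r)%R -> (0 <= p)%R -> (0 < Tm)%R ->
  (if Tm%:E <= h then dint r p Tm%:E h else 0) = (Gv (p / r) r Tm h)%:E.
Proof.
move=> r0 p0 T0; rewrite /Gv; case: ifP => _ //.
by rewrite dintE // lee_fin ltW.
Qed.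

Lemma KE (g al r Tm : R) (h : \bar R) :
  (if Tm%:E <= h then (g * expR (- r * Tm) + al * edisc r h)%:E else 0) = (Kv g al r Tm h)%:E.
Proof. by rewrite /Kv; case: ifP. Qed.

Lemma stopping_min (Y : R -> T -> R) tau (Tm : R) : (0 <= Tm)%R ->
  stopping_time Y tau -> stopping_time Y (fun w => mine (tau w) Tm%:E).
Proof.
move=> T0 [tau0 st]; split.
  by move=> w; rewrite le_min tau0 lee_fin.
move=> t t0.
have [Tt|tT] := leP Tm t.
  rewrite (_ : [set _ | _] = setT); last first.
    by apply/seteqP; split => w //= _; rewrite ge_min lee_fin Tt orbT.
  have [S0 SC _] := @smallest_sigma_algebra _ setT
    [set A | exists s, [/\ 0 <= s, s <= t & exists B : set R, measurable B /\ A = Y s @^-1` B]]%R.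
  by have := SC set0 S0; rewrite setD0.
rewrite (_ : [set _ | _] = [set w | tau w <= t%:E]); first exact: st.
by apply/seteqP; split => w /=; rewrite ge_min lee_fin; [case/orP => // Tt; move: tT; rewrite ltNge Tt | move=> ->].
Qed.
End RW.

Unset Implicit Arguments.
Set Strict Implicit.

Theorem lemma5p2 (R : realType) (d : measure_display) (Omega : measurableType d)
  (P : probability Omega R) (X : R -> Omega -> R) (r pc gamma alc : R) :
  measure_is_complete P ->
  is_spectrally_negative_levy P X ->
  0 < r ->
  (\int[P]_w (expR (X 1 w))%:E)%E = (expR r)%:E ->
  0 < pc -> 0 < alc -> 0 <= gamma ->
  forall x Tm : R, 0 < x -> 0 < Tm ->
  (vtilde P X r pc gamma alc x Tm <= vbar P X r pc gamma alc x Tm /\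
   vbar P X r pc gamma alc x Tm <=
     vtilde P X r pc gamma alc x Tm
     + \int[P]_w (if Tm%:E <= theta (start_at x X) w
                  then (gamma * expR (- r * Tm)
                        + alc * edisc r (theta (start_at x X) w))%:E
                  else 0))%E.
Proof.
move=> Pc [[mX _ [rc lc] _ _] jumps _ _] r0 _ pc0 al0 g0 x Tm x0 T0.
have mth : measurable_fun setT (theta (start_at x X)) := @theta_meas _ _ _ P X x Pc mX rc lc jumps.
set Y := start_at x X.
have mY s : measurable_fun setT (Y s).
  by apply: measurable_funD => //; exact: measurable_cst.
set c := pc / r.
have c0 : 0 <= c by rewrite divr_ge0 // ltW.
have rr : 0 <= r := ltW r0.
have al0' : 0 <= alc := ltW al0.
have th0 w : (0 <= theta Y w)%E := theta_ge0 Y w.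
have intG : P.-integrable setT (fun w => (Gv c r Tm (theta Y w))%:E).
  exact: (@int_bnd _ _ _ P _ _ c0 (Gv_meas c r Tm mth) (fun w => Gv_bnd c0 rr T0 (th0 w))).
have intK : P.-integrable setT (fun w => (Kv gamma alc r Tm (theta Y w))%:E).
  exact: (@int_bnd _ _ _ P _ _ (addr_ge0 g0 al0') (Kv_meas gamma alc r Tm mth)
           (fun w => Kv_bnd g0 al0' rr T0 (th0 w))).
have intP tau : stopping_time Y tau ->
    P.-integrable setT (fun w => (Pv c gamma alc r (tau w) (theta Y w))%:E).
  move=> st; have mt := stopping_meas mY st.
  exact: (@int_bnd _ _ _ P _ _ (addr_ge0 (addr_ge0 c0 g0) al0') (Pv_meas c gamma alc r mt mth)
           (fun w => Pv_bnd c0 g0 al0' rr (st.1 w) (th0 w))).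
have intPB tau : stopping_time Y tau ->
    P.-integrable setT (fun w => (PBv c gamma alc r Tm (tau w) (theta Y w))%:E).
  move=> st; have mt := stopping_meas mY st.
  exact: (@int_bnd _ _ _ P _ _ (addr_ge0 (addr_ge0 c0 g0) al0') (PBv_meas c gamma alc r Tm mt mth)
           (fun w => PBv_bnd c0 g0 al0' rr T0 (st.1 w) (th0 w))).
have eqP tau : stopping_time Y tau -> (\int[P]_w payoff r pc gamma alc Y tau w =
    \int[P]_w (Pv c gamma alc r (tau w) (theta Y w))%:E)%E.
  by move=> st; apply: eq_integral => w _; rewrite payoffE // ?(ltW pc0) // st.1.
have eqPB tau : stopping_time Y tau -> (\int[P]_w payoff_bar r pc gamma alc Tm Y tau w =
    \int[P]_w (PBv c gamma alc r Tm (tau w) (theta Y w))%:E)%E.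
  by move=> st; apply: eq_integral => w _; rewrite payoff_barE // ?(ltW pc0) // st.1.
have eqG : (\int[P]_w (if Tm%:E <= theta Y w then dint r pc Tm%:E (theta Y w) else 0) =
    \int[P]_w (Gv c r Tm (theta Y w))%:E)%E.
  by apply: eq_integral => w _; rewrite GE // ltW.
have eqK : (\int[P]_w (if Tm%:E <= theta Y w then (gamma * expR (- r * Tm)
                        + alc * edisc r (theta Y w))%:E else 0) =
    \int[P]_w (Kv gamma alc r Tm (theta Y w))%:E)%E.
  by apply: eq_integral => w _; rewrite KE.
rewrite /vtilde -/Y eqG eqK.
set gI := (\int[P]_w (Gv c r Tm (theta Y w))%:E)%E.
set kI := (\int[P]_w (Kv gamma alc r Tm (theta Y w))%:E)%E.
have gfin : gI \is a fin_num := integrable_fin_num measurableT intG.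
have kfin : kI \is a fin_num := integrable_fin_num measurableT intK.
split.
- rewrite leeBlDr //.
  apply: ge_ereal_sup => _ [tau [st [N [mN PN HN]]] <-].
  rewrite eqP //.
  set tau' := fun w => mine (tau w) Tm%:E.
  have st' : stopping_time Y tau' := stopping_min (ltW T0) st.
  have le1 : (\int[P]_w payoff_bar r pc gamma alc Tm Y tau' w <= vbar P X r pc gamma alc x Tm)%E.
    apply: ereal_sup_ubound; exists tau' => //; split => //.
    exists N; split => // w /= nle; apply: HN => /= tle; apply: nle.
    by rewrite /tau' le_min !ge_min tle lexx orbT.
  rewrite eqPB // in le1.
  apply: (le_trans _ (leeD2r gI le1)).
  rewrite -leeBlDr // -(integralB measurableT (intP _ st) intG).
  rewrite (negligible_integral mN) //; last exact: (integrableB measurableT (intP _ st) intG).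
  rewrite [X in (_ <= X)%E](negligible_integral mN) //; last exact: intPB _ st'.
  have mD : measurable (setT `\` N) by exact: measurableD.
  apply: le_integral => //.
  + exact: (integrableS measurableT mD (fun _ _ => I) (integrableB measurableT (intP _ st) intG)).
  + exact: (integrableS measurableT mD (fun _ _ => I) (intPB _ st')).
  + move=> w; rewrite inE => -[_ /= Nw].
    have tle : (tau w <= theta Y w)%E by apply: contrapT => nl; apply: Nw; apply: HN.
    rewrite /= -EFinB lee_fin; apply: ptL => //; exact: st.1.
- apply: ge_ereal_sup => _ [tau [st [N [mN PN HN]]] <-].
  rewrite eqPB //.
  have le1 : (\int[P]_w payoff r pc gamma alc Y tau w <= v P X r pc gamma alc x)%E.
    apply: ereal_sup_ubound; exists tau => //; split => //.
    exists N; split => // w /= nle; apply: HN => /= tle; apply: nle.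
    by move: tle; rewrite le_min => /andP[].
  rewrite eqP // in le1.
  apply: (le_trans _ (leeD2r kI (leeB le1 (lexx gI)))).
  rewrite -(integralB measurableT (intP _ st) intG).
  rewrite -(integralD measurableT (integrableB measurableT (intP _ st) intG) intK).
  have iS : P.-integrable setT (fun w => (Pv c gamma alc r (tau w) (theta Y w))%:E
        - (Gv c r Tm (theta Y w))%:E + (Kv gamma alc r Tm (theta Y w))%:E)%E.
    apply: integrableD => //; apply: integrableB => //; exact: intP.
  rewrite [X in (X <= _)%E](negligible_integral mN) //; last exact: intPB _ st.
  rewrite [X in (_ <= X)%E](negligible_integral mN) //.
  have mD : measurable (setT `\` N) by exact: measurableD.
  apply: le_integral => //.
  + exact: (integrableS measurableT mD (fun _ _ => I) (intPB _ st)).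
  + exact: (integrableS measurableT mD (fun _ _ => I) iS).
  + move=> w; rewrite inE => -[_ /= Nw].
    have tle : (tau w <= mine (theta Y w) Tm%:E)%E by apply: contrapT => nl; apply: Nw; apply: HN.
    move: tle; rewrite le_min => /andP[tle tT].
    rewrite /= -EFinB -EFinD lee_fin; apply: ptU => //; exact: st.1.
Qed.
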